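(* (a) Let $n\ge1$ and let $x\in\beta\mathbb{N}$ be an ultrafilter on a finite level with $x\notin\overline{L_0\cup L_1\cup\cdots\cup L_{n-1}}$. Then there is an ultrafilter $y\in\overline{L_n}$ such that $y\,\tilde{\mid}\,x$. (b) Let $x\in\overline{L_m}$ and let $n\ge m$. Then there exists an ultrafilter $y\in\overline{L_n}$ such that $x\,\tilde{\mid}\,y$.
   Context: $\mathbb{N}=\{1,2,3,\dots\}$; $\beta\mathbb{N}$ is the set of ultrafilters on $\mathbb{N}$ (Stone–Čech compactification of discrete $\mathbb{N}$). For $A\subseteq\mathbb{N}$, $\overline{A}=\{x\in\beta\mathbb{N}:A\in x\}$. $P$ is the set of primes, $L_0=\{1\}$, $L_n=\{a_1\cdots a_n:a_1,\dots,a_n\in P\}$. An ultrafilter $x$ is on a finite level if $x\in\overline{L_i}$ for some $i\ge0$. For $x,y\in\beta\mathbb{N}$, $x\,\tilde{\mid}\,y$ iff for every $A\in x$ the set $\{k\in\mathbb{N}:\exists a\in A,\ a\mid k\}$ belongs to $y$. *)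

(* Defs.v *)
From mathcomp Require Import all_boot.
Set Implicit Arguments. Unset Strict Implicit. Unset Printing Implicit Defensive.

(* Subsets of nat are predicates nat -> Prop.  N = {1,2,...} is modelled as the
   positive naturals: an ultrafilter on N is a family of subsets of nat that is
   an ultrafilter on nat containing the set of positive naturals. *)
Definition nset := nat -> Prop.

Definition posN : nset := fun k => 0 < k.

Definition is_ultrafilter (x : nset -> Prop) : Prop :=
  [/\ x posN,
      ~ x (fun _ => False),
      (forall A B : nset, x A -> (forall k, A k -> B k) -> x B),
      (forall A B : nset, x A -> x B -> x (fun k => A k /\ B k)) &
      (forall A : nset, x A \/ x (fun k => ~ A k))].

(* A \in x  (i.e. x \in closure of A) is written  x A. *)

Definition L (n : nat) : nset :=
  fun k => exists s : seq nat, [/\ size s = n, all prime s & k = \prod_(p <- s) p].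

Definition up_div (A : nset) : nset :=
  fun k => 0 < k /\ exists a, A a /\ a %| k.

Definition tdiv (x y : nset -> Prop) : Prop :=
  forall A : nset, x A -> y (up_div A).

Definition finite_level (x : nset -> Prop) : Prop := exists i, x (L i).

(* Main.v *)
Require Import Defs.
From mathcomp Require Import all_boot.
From Stdlib Require Import ClassicalEpsilon.

Definition img (x : nset -> Prop) (f : nat -> nat) : nset -> Prop :=
  fun A => x (fun k => A (f k)).

Lemma img_uf x f : is_ultrafilter x -> x (fun k => 0 < f k) -> is_ultrafilter (img x f).
Proof.
case=> _ h0 hm hI hC hp; split => //.
- by move=> A B; rewrite /img => hA hAB; apply: hm hA _ => k; apply: hAB.
- by move=> A B; rewrite /img => hA hB; apply: hI.
- by move=> A; rewrite /img; apply: hC.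
Qed.

Lemma L_pos {n d} : L n d -> 0 < d.
Proof.
case=> s [_ hs ->]; elim: s hs => [|p s IH] /=; first by rewrite big_nil.
by case/andP=> hp hs; rewrite big_cons muln_gt0 prime_gt0 // IH.
Qed.

Lemma L_double j k : L j k -> L j.+1 (k * 2).
Proof.
case=> s [hsz hs ->]; exists (2 :: s); split => //=; first by rewrite hsz.
by rewrite big_cons mulnC.
Qed.

Lemma L_pow d {m k} : L m k -> L (m + d) (k * 2 ^ d).
Proof.
elim: d => [|d IH] h; first by rewrite addn0 expn0 muln1.
by rewrite addnS expnS mulnA [k * 2]mulnC -mulnA mulnC; apply: L_double; apply: IH.
Qed.

Definition gdiv (n k : nat) : nat :=
  epsilon (inhabits 0) (fun d => L n d /\ d %| k).

Lemma gdiv_spec {n i k} : n <= i -> L i k -> L n (gdiv n k) /\ gdiv n k %| k.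
Proof.
move=> hni hk; apply: (epsilon_spec (inhabits 0) (fun d => L n d /\ d %| k)).
case: hk => s [hsz hs ->].
exists (\prod_(p <- take n s) p); split.
- exists (take n s); split => //.
  + by rewrite size_takel // hsz.
  + by move: hs; rewrite -{1}(cat_take_drop n s) all_cat => /andP[].
- by rewrite -{2}(cat_take_drop n s) big_cat /= dvdn_mulr.
Qed.

Theorem theorem2p14 :
  (* (a) *)
  (forall (n : nat) (x : nset -> Prop),
      1 <= n -> is_ultrafilter x -> finite_level x ->
      ~ x (fun k => exists i, i < n /\ L i k) ->
      exists y : nset -> Prop, [/\ is_ultrafilter y, y (L n) & tdiv y x])
  /\
  (* (b) *)
  (forall (m n : nat) (x : nset -> Prop),
      is_ultrafilter x -> x (L m) -> m <= n ->
      exists y : nset -> Prop, [/\ is_ultrafilter y, y (L n) & tdiv x y]).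
Proof.
split.
- move=> n x _ hx [i hi] hnot.
  have hni : n <= i.
    rewrite leqNgt; apply/negP => lt; apply: hnot.
    by case: hx => _ _ hm _ _; apply: (hm _ _ hi) => k hk; exists i.
  have hx' := hx; case: hx' => _ _ hm hI _.
  exists (img x (gdiv n)); split.
  + apply: img_uf => //; apply: (hm _ _ hi) => k hk.
    exact: (L_pos (gdiv_spec hni hk).1).
  + by rewrite /img; apply: (hm _ _ hi) => k hk; exact: (gdiv_spec hni hk).1.
  + move=> A hA; rewrite /img in hA.
    apply: (hm _ _ (hI _ _ hA hi)) => k [hAk hk]; split; first exact: L_pos hk.
    by exists (gdiv n k); split => //; exact: (gdiv_spec hni hk).2.
- move=> m n x hx hm0 hmn.
  have hx' := hx; case: hx' => hpos _ hm hI _.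
  exists (img x (fun k => k * 2 ^ (n - m))); split.
  + apply: img_uf => //; apply: (hm _ _ hm0) => k hk.
    by rewrite muln_gt0 expn_gt0 /= (L_pos hk).
  + rewrite /img; apply: (hm _ _ hm0) => k hk.
    by have := L_pow (n - m) hk; rewrite subnKC.
  + move=> A hA; rewrite /img.
    apply: (hm _ _ (hI _ _ hA hpos)) => k [hAk hk]; split.
      by rewrite muln_gt0 expn_gt0 /= hk.
    by exists k; split => //; exact: dvdn_mulr.
Qed.
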